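(* Let $G$ and $N$ be finitely presented groups and $Q$ a finite group. The following are equivalent: (1) there is a surjective homomorphism $G\to N\times Q$; (2) there is a surjective homomorphism $\tau:G\to Q$ and a $(Q,\tau)$-presentation $\langle\mathcal X\cup\mathcal Y\mid\mathcal R\rangle$ of $G$, with $\mathcal X=\{x_1,\dots,x_t\}$ and $\mathcal Y=\{y_1,\dots,y_\ell\}$, such that there is an assignment $x_j\mapsto h_j\in N$, $y_j\mapsto k_j\in N$ under which every relator $r\in\mathcal R$ evaluates to $1_N$ (each letter $x_j^{\pm1}$ replaced by $h_j^{\pm1}$, each $y_j^{\pm1}$ by $k_j^{\pm1}$) and $\langle k_1,\dots,k_\ell\rangle=N$.
   Context: Let $\tau:G\to Q$ be an epimorphism. A $(Q,\tau)$-presentation of $G$ is a presentation $\langle\mathcal X\cup\mathcal Y\mid\mathcal R\rangle$ of $G$ with $\mathcal X,\mathcal Y,\mathcal R$ finite, the generators in $\mathcal X$ representing elements of $G$ on which $\tau$ restricts to a bijection $\mathcal X\to Q$, and the elements represented by $\mathcal Y$ generating $\ker(\tau)$. (In the paper, condition (2) is phrased as: the problem ''EquationsSubspan'' answers Yes on input $N$ and the system of equations without constants obtained from $\mathcal R$ by replacing each $x_j$ by a variable $X_j$ and each $y_j$ by a variable $Y_j$, i.e. there is a solution $\sigma$ with $\langle\sigma(Y_1),\dots,\sigma(Y_\ell)\rangle=N$.) *)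

(* Defs.v *)
(* Groups here are possibly infinite,
   so we use an honest record of a group rather than finGroupType. *)
From Stdlib Require List.
From mathcomp Require Import all_boot.
Set Implicit Arguments. Unset Strict Implicit. Unset Printing Implicit Defensive.

Record group := Group {
  gcar :> Type;
  gmul : gcar -> gcar -> gcar;
  ginv : gcar -> gcar;
  gone : gcar;
  gmulA : forall x y z, gmul x (gmul y z) = gmul (gmul x y) z;
  gmul1 : forall x, gmul gone x = x;
  gmulV : forall x, gmul (ginv x) x = gone
}.
Arguments gmul {g}. Arguments ginv {g}. Arguments gone {g}.

Definition is_hom (G H : group) (f : G -> H) : Prop :=
  forall x y, f (gmul x y) = gmul (f x) (f y).

Definition prod_mul (G H : group) (p q : G * H) : G * H :=
  (gmul p.1 q.1, gmul p.2 q.2).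
Definition prod_inv (G H : group) (p : G * H) : G * H := (ginv p.1, ginv p.2).

Lemma prod_mulA (G H : group) (x y z : G * H) :
  prod_mul x (prod_mul y z) = prod_mul (prod_mul x y) z.
Proof. by rewrite /prod_mul /= !gmulA. Qed.
Lemma prod_mul1 (G H : group) (x : G * H) : prod_mul (gone, gone) x = x.
Proof. by case: x => a b; rewrite /prod_mul /= !gmul1. Qed.
Lemma prod_mulV (G H : group) (x : G * H) : prod_mul (prod_inv x) x = (gone, gone).
Proof. by case: x => a b; rewrite /prod_mul /= !gmulV. Qed.

Definition prod_group (G H : group) : group :=
  @Group (G * H)%type (@prod_mul G H) (@prod_inv G H) (gone, gone)
    (@prod_mulA G H) (@prod_mul1 G H) (@prod_mulV G H).

Definition finite_group (Q : group) : Prop :=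
  exists (n : nat) (e : 'I_n -> Q), forall q : Q, exists i, e i = q.

(* Words over an alphabet V of generators: letters (v, b), b = true means v^-1. *)
Definition word (V : Type) := seq (V * bool).

Definition eval_letter (G : group) (V : Type) (a : V -> G) (l : V * bool) : G :=
  if l.2 then ginv (a l.1) else a l.1.

Definition eval_word (G : group) (V : Type) (a : V -> G) (w : word V) : G :=
  foldr (fun l acc => gmul (eval_letter a l) acc) gone w.

(* Equality of words in the group <V | R>: the congruence generated by
   free reduction and insertion of relators. *)
Inductive wequiv (V : Type) (R : seq (word V)) : word V -> word V -> Prop :=
  | wequiv_refl w : wequiv R w w
  | wequiv_sym u v : wequiv R u v -> wequiv R v u
  | wequiv_trans u v w : wequiv R u v -> wequiv R v w -> wequiv R u w
  | wequiv_free u v x b :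
      wequiv R (u ++ v) (u ++ [:: (x, b); (x, ~~ b)] ++ v)
  | wequiv_rel u v r : List.In r R -> wequiv R (u ++ v) (u ++ r ++ v).

Definition is_presentation (G : group) (V : Type) (a : V -> G) (R : seq (word V)) : Prop :=
  (forall g : G, exists w : word V, eval_word a w = g) /\
  (forall w : word V, eval_word a w = gone <-> wequiv R w [::]).

Definition finitely_presented (G : group) : Prop :=
  exists (n : nat) (a : 'I_n -> G) (R : seq (word 'I_n)), is_presentation a R.

Definition in_span (G : group) (V : Type) (s : V -> G) (g : G) : Prop :=
  exists w : word V, eval_word s w = g.

(* A (Q,tau)-presentation of G with X = {x_1..x_t} (images xg) and
   Y = {y_1..y_l} (images yg), generator alphabet 'I_t + 'I_l. *)
Definition QT_presentation (G Q : group) (tau : G -> Q) (t l : nat)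
    (xg : 'I_t -> G) (yg : 'I_l -> G) (R : seq (word ('I_t + 'I_l))) : Prop :=
  [/\ is_presentation (fun v => match v with inl i => xg i | inr j => yg j end) R,
      bijective (fun i => tau (xg i))
    & forall g : G, tau g = gone <-> in_span yg g].

(* Main.v *)
Require Import Defs.
From Stdlib Require List.
From Stdlib Require Import ClassicalEpsilon.
From mathcomp Require Import all_boot.
Set Implicit Arguments. Unset Strict Implicit. Unset Printing Implicit Defensive.


Section GroupLemmas.
Variable G : group.
Implicit Types x y z u v : G.

Lemma mulgV x : gmul x (ginv x) = gone.
Proof.
rewrite -[gmul x (ginv x)]gmul1 -{1}(gmulV (ginv x)).
by rewrite -gmulA (gmulA (ginv x) x (ginv x)) gmulV gmul1 gmulV.
Qed.

Lemma mulg1 x : gmul x gone = x.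
Proof. by rewrite -(gmulV x) gmulA mulgV gmul1. Qed.

Lemma mulgVK u v : gmul (gmul u (ginv v)) v = u.
Proof. by rewrite -gmulA gmulV mulg1. Qed.

Lemma mulgKV u v : gmul (gmul u v) (ginv v) = u.
Proof. by rewrite -gmulA mulgV mulg1. Qed.

Lemma eq_invg u v : gmul u v = gone -> u = ginv v.
Proof. by move=> H; rewrite -(mulgKV u v) H gmul1. Qed.

Lemma invgK x : ginv (ginv x) = x.
Proof. by rewrite -[LHS]mulg1 -(gmulV x) gmulA gmulV gmul1. Qed.

Lemma invMg x y : ginv (gmul x y) = gmul (ginv y) (ginv x).
Proof.
apply/esym/eq_invg.
by rewrite gmulA -(gmulA (ginv y)) gmulV mulg1 gmulV.
Qed.

Lemma invg1 : ginv (gone : G) = gone.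
Proof. by apply/esym/eq_invg; rewrite gmul1. Qed.

Lemma idem1 x : gmul x x = x -> x = gone.
Proof. by move=> H; rewrite -(gmulV x) -{3}H gmulA gmulV gmul1. Qed.
End GroupLemmas.

Section Hom.
Variables (G H : group) (f : G -> H).
Hypothesis fh : is_hom f.
Lemma hom1 : f gone = gone.
Proof. by apply: idem1; rewrite -fh gmul1. Qed.
Lemma homV x : f (ginv x) = ginv (f x).
Proof. by apply: eq_invg; rewrite -fh gmulV hom1. Qed.
End Hom.

Fixpoint winv V (w : word V) : word V :=
  if w is l :: w' then winv w' ++ [:: (l.1, ~~ l.2)] else [::].

Fixpoint wsubst A B (s : A -> word B) (w : word A) : word B :=
  if w is l :: w' then (if l.2 then winv (s l.1) else s l.1) ++ wsubst s w'
  else [::].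

Definition lmap A B (m : A -> B) (l : A * bool) : B * bool := (m l.1, l.2).

Lemma winv_cat V (u v : word V) : winv (u ++ v) = winv v ++ winv u.
Proof. by elim: u => [|l u IH] /=; rewrite ?cats0 // IH catA. Qed.

Lemma winvK V (w : word V) : winv (winv w) = w.
Proof. by elim: w => [|[x b] w IH] //=; rewrite winv_cat IH /= negbK. Qed.

Lemma wsubst_cat A B (s : A -> word B) u v :
  wsubst s (u ++ v) = wsubst s u ++ wsubst s v.
Proof. by elim: u => [|l u IH] //=; rewrite IH catA. Qed.

Lemma wsubst_winv A B (s : A -> word B) w :
  wsubst s (winv w) = winv (wsubst s w).
Proof.
elim: w => [|[x b] w IH] //=.
rewrite wsubst_cat IH winv_cat /= cats0.
by case: b => /=; rewrite ?winvK.
Qed.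

Lemma eval_cons (G : group) V (a : V -> G) l w :
  eval_word a (l :: w) = gmul (eval_letter a l) (eval_word a w).
Proof. by []. Qed.
Lemma eval_nil (G : group) V (a : V -> G) : eval_word a [::] = gone.
Proof. by []. Qed.
Arguments eval_word : simpl never.

Section Eval.
Variables (G : group).

Lemma eval_cat (V : Type) (a : V -> G) u v :
  eval_word a (u ++ v) = gmul (eval_word a u) (eval_word a v).
Proof.
elim: u => [|l u IH]; first by rewrite cat0s eval_nil gmul1.
by rewrite cat_cons !eval_cons IH gmulA.
Qed.

Lemma eval_winv (V : Type) (a : V -> G) w : eval_word a (winv w) = ginv (eval_word a w).
Proof.
elim: w => [|[x b] w IH]; first by rewrite /= eval_nil invg1.
rewrite [winv _]/= eval_cat IH !eval_cons eval_nil /eval_letter /= mulg1 invMg.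
by case: b => //=; rewrite invgK.
Qed.

Lemma eq_eval (V : Type) (a b : V -> G) w : (forall x, a x = b x) ->
  eval_word a w = eval_word b w.
Proof.
move=> E; elim: w => [|[x c] w IH] //.
by rewrite !eval_cons IH /eval_letter /= E.
Qed.

Lemma eval_ones (V : Type) (a : V -> G) w : (forall x, a x = gone) -> eval_word a w = gone.
Proof.
move=> E; elim: w => [|[x c] w IH] //.
by rewrite eval_cons IH /eval_letter /= E mulg1; case: c => //; rewrite invg1.
Qed.

Lemma eval_subst (V : Type) B (a : B -> G) (s : V -> word B) w :
  eval_word a (wsubst s w) = eval_word (fun x => eval_word a (s x)) w.
Proof.
elim: w => [|[x c] w IH] //.
rewrite [wsubst _ _]/= eval_cat IH eval_cons /eval_letter /=.
by case: c => //; rewrite eval_winv.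
Qed.

Lemma eval_map (V : Type) B (a : B -> G) (m : V -> B) w :
  eval_word a (map (lmap m) w) = eval_word (fun x => a (m x)) w.
Proof. by elim: w => [|[x c] w IH] //; rewrite map_cons !eval_cons IH. Qed.

Lemma hom_eval (V : Type) (H : group) (f : G -> H) (a : V -> G) w : is_hom f ->
  f (eval_word a w) = eval_word (fun x => f (a x)) w.
Proof.
move=> fh; elim: w => [|[x c] w IH]; first by rewrite !eval_nil; exact: hom1.
rewrite !eval_cons fh IH /eval_letter; case: c => //=.
by rewrite (homV fh).
Qed.
End Eval.

Lemma wequiv_sound (H : group) V (b : V -> H) (R : seq (word V)) :
  (forall r, List.In r R -> eval_word b r = gone) ->
  forall u v, wequiv R u v -> eval_word b u = eval_word b v.
Proof.
move=> HR u v; elim => {u v}.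
- by [].
- by move=> u v _ ->.
- by move=> u v w _ -> _ ->.
- move=> u v x c; rewrite !eval_cat !eval_cons eval_nil /eval_letter /=.
  by case: c => /=; rewrite mulg1 ?gmulV ?mulgV gmul1.
- by move=> u v r Hr; rewrite !eval_cat (HR r Hr) gmul1.
Qed.

Section Wequiv.
Variables (V : Type) (R : seq (word V)).
Notation "u ~ v" := (wequiv R u v) (at level 70).

Lemma wcong u v p s : u ~ v -> (p ++ u ++ s) ~ (p ++ v ++ s).
Proof.
elim => {u v}.
- by move=> w; apply: wequiv_refl.
- by move=> u v _ H; apply: wequiv_sym.
- by move=> u v w _ H1 _ H2; apply: wequiv_trans H2.
- move=> u v x b; have := wequiv_free R (p ++ u) (v ++ s) x b.
  by rewrite -!catA.
- move=> u v r Hr; have := wequiv_rel (p ++ u) (v ++ s) Hr.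
  by rewrite -!catA.
Qed.

Lemma wcat u u' v v' : u ~ u' -> v ~ v' -> (u ++ v) ~ (u' ++ v').
Proof.
move=> H1 H2; apply: (wequiv_trans (v:=u' ++ v)).
  by have := wcong [::] v H1.
by have := wcong u' [::] H2; rewrite !cats0.
Qed.

Lemma wrel r : List.In r R -> r ~ [::].
Proof.
by move=> Hr; apply: wequiv_sym; have := wequiv_rel [::] [::] Hr; rewrite /= cats0.
Qed.

Lemma wfree0 x b : [:: (x, b); (x, ~~ b)] ~ [::].
Proof. by apply: wequiv_sym; have := wequiv_free R [::] [::] x b. Qed.

Lemma wrinv w : (w ++ winv w) ~ [::].
Proof.
elim: w => [|[x b] w IH] /=; first exact: wequiv_refl.
have -> : (x, b) :: w ++ winv w ++ [:: (x, ~~ b)] =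
  [:: (x, b)] ++ (w ++ winv w) ++ [:: (x, ~~ b)] by rewrite /= catA.
apply: wequiv_trans (wcong _ _ IH) _.
exact: wfree0.
Qed.

Lemma wlinv w : (winv w ++ w) ~ [::].
Proof. by have := wrinv (winv w); rewrite winvK. Qed.

Lemma winv_equiv u v : u ~ v -> winv u ~ winv v.
Proof.
move=> H.
apply: (wequiv_trans (v:=winv u ++ (v ++ winv v))).
  by have := wcat (wequiv_refl R (winv u)) (wequiv_sym (wrinv v)); rewrite cats0.
apply: (wequiv_trans (v:=(winv u ++ u) ++ winv v)).
  by rewrite catA; apply: wcat; [apply: wcat; [apply: wequiv_refl|apply: wequiv_sym]|apply: wequiv_refl].
by have := wcat (wlinv u) (wequiv_refl R (winv v)).
Qed.
End Wequiv.

Lemma wsubst_equiv A B (s : A -> word B) (R0 : seq (word A)) (R : seq (word B)) :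
  (forall r, List.In r R0 -> wequiv R (wsubst s r) [::]) ->
  forall u v, wequiv R0 u v -> wequiv R (wsubst s u) (wsubst s v).
Proof.
move=> HR u v; elim => {u v}.
- by move=> w; apply: wequiv_refl.
- by move=> u v _ H; apply: wequiv_sym.
- by move=> u v w _ H1 _ H2; apply: wequiv_trans H2.
- move=> u v x b; rewrite !wsubst_cat /=; apply: wequiv_sym.
  rewrite catA.
  have := wcong (wsubst s u) (wsubst s v) (_ : wequiv R
    ((if b then winv (s x) else s x) ++ (if ~~ b then winv (s x) else s x)) [::]).
  rewrite /= -!catA; apply.
  by case: b => /=; [apply: wlinv|apply: wrinv].
- move=> u v r Hr; rewrite !wsubst_cat; apply: wequiv_sym.
  by have := wcong (wsubst s u) (wsubst s v) (HR r Hr).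
Qed.

Arguments eval_word : simpl never.

Lemma In_cat T (x : T) s1 s2 : List.In x (s1 ++ s2) <-> List.In x s1 \/ List.In x s2.
Proof.
elim: s1 => [|y s1 IH] /=; first by split; [right|case].
by rewrite IH; split; [case=> [->|[]]; auto|case=> [[]|]; auto].
Qed.

Lemma In_map T U (f : T -> U) y s : List.In y (map f s) -> exists x, List.In x s /\ y = f x.
Proof.
elim: s => [|x s IH] //= [<-|/IH [x' [H ->]]]; first by exists x; auto.
by exists x'; auto.
Qed.

Lemma In_map2 T U (f : T -> U) x s : List.In x s -> List.In (f x) (map f s).
Proof. by elim: s => [|y s IH] //= [->|/IH]; auto. Qed.

Lemma In_mem (T : eqType) (x : T) s : x \in s -> List.In x s.
Proof. by elim: s => [|y s IH] //=; rewrite in_cons => /orP [/eqP ->|/IH]; auto. Qed.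

Lemma tietze (G : group) (A : Type) (a : A -> G) (R0 : seq (word A))
    (Z : finType) (z : Z -> G) :
  is_presentation a R0 -> (forall g, in_span z g) ->
  exists R, is_presentation z R.
Proof.
move=> [Hagen Harel] Hz.
pose alpha i := proj1_sig (constructive_indefinite_description _ (Hz (a i))).
have Halpha i : eval_word z (alpha i) = a i.
  exact: (proj2_sig (constructive_indefinite_description _ (Hz (a i)))).
pose beta y := proj1_sig (constructive_indefinite_description _ (Hagen (z y))).
have Hbeta y : eval_word a (beta y) = z y.
  exact: (proj2_sig (constructive_indefinite_description _ (Hagen (z y)))).
pose R := map (wsubst alpha) R0 ++
          map (fun y => (y, true) :: wsubst alpha (beta y)) (enum Z).
have HR0 r : List.In r R0 -> eval_word a r = gone.
  by move=> Hr; apply/Harel; apply: wrel.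
have Hsound r : List.In r R -> eval_word z r = gone.
  move=> Hr; case: (proj1 (In_cat r _ _) Hr) => Hr2; have [x [Hx ->]] := In_map Hr2.
    by rewrite eval_subst (eq_eval _ Halpha) HR0.
  by rewrite eval_cons eval_subst (eq_eval _ Halpha) Hbeta /eval_letter /= gmulV.
have Hgen1 y : wequiv R [:: (y, false)] (wsubst alpha (beta y)).
  have Hin : List.In ((y, true) :: wsubst alpha (beta y)) R.
    by apply/In_cat; right; apply: In_map2; apply: In_mem; rewrite mem_enum.
  apply: (wequiv_trans (v:=[:: (y, false)] ++ ((y, true) :: wsubst alpha (beta y)))).
    have := wcat (wequiv_refl R [:: (y, false)]) (wequiv_sym (wrel Hin)).
    by rewrite cats0.
  have := wcat (wfree0 R y false) (wequiv_refl R (wsubst alpha (beta y))).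
  by rewrite /=.
have Hgen2 w : wequiv R w (wsubst alpha (wsubst beta w)).
  elim: w => [|[y b] w IH]; first exact: wequiv_refl.
  rewrite [wsubst beta _]/= wsubst_cat.
  have -> : (y, b) :: w = [:: (y, b)] ++ w by [].
  apply: wcat => //; case: b => /=; last exact: Hgen1.
  rewrite wsubst_winv.
  by have := winv_equiv (Hgen1 y).
exists R; split => // w; split.
- move=> Hw.
  apply: (wequiv_trans (Hgen2 w)).
  have : wequiv R0 (wsubst beta w) [::].
    by apply/Harel; rewrite eval_subst (eq_eval _ Hbeta).
  move/(wsubst_equiv (s:=alpha) (R:=R)); apply.
  by move=> r Hr; apply: wrel; apply/In_cat; left; apply: In_map2.
- by move/(wequiv_sound Hsound); rewrite eval_nil.
Qed.

Arguments eval_word : simpl never.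

Definition ceq (T : Type) (p q : T) : bool :=
  if excluded_middle_informative (p = q) then true else false.
Lemma ceqP (T : Type) (p q : T) : reflect (p = q) (ceq p q).
Proof. by rewrite /ceq; case: excluded_middle_informative => H; constructor. Qed.

Lemma finite_bij (Q : group) : finite_group Q ->
  exists t (E : 'I_t -> Q), bijective E.
Proof.
move=> [m [e He]].
pose S := [set i : 'I_m | [forall j : 'I_m, (j < i) ==> ~~ ceq (e j) (e i)]].
pose E (k : 'I_#|S|) := e (enum_val k).
have key (a b : 'I_m) : b \in S -> e a = e b -> a < b -> False.
  rewrite inE => /forallP/(_ a)/implyP Hb Heq Hlt.
  by move: (Hb Hlt); rewrite Heq; case: ceqP.
have Einj : injective E.
  move=> k1 k2; rewrite /E => H.
  apply: enum_val_inj.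
  have H1 := enum_valP k1; have H2 := enum_valP k2.
  apply: val_inj => /=.
  case: (ltngtP (enum_val k1) (enum_val k2)) => // Hlt; exfalso.
  - exact: (key _ _ H2 H Hlt).
  - exact: (key _ _ H1 (esym H) Hlt).
have Esurj q : exists k, E k = q.
  have [i0 Hi0] := He q.
  case: (@arg_minnP _ i0 (fun i => ceq (e i) q) (fun i => nat_of_ord i)).
    by apply/ceqP.
  move=> i /ceqP Hi Hmin.
  have HiS : i \in S.
    rewrite inE; apply/forallP => j; apply/implyP => lt; apply/negP => /ceqP ej.
    have := Hmin j; rewrite ej Hi => /(_ (introT (ceqP _ _) erefl)).
    by rewrite leqNgt lt.
  exists (enum_rank_in HiS i); rewrite /E enum_rankK_in //.
pose Einv q := proj1_sig (constructive_indefinite_description _ (Esurj q)).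
have EinvK q : E (Einv q) = q.
  exact: (proj2_sig (constructive_indefinite_description _ (Esurj q))).
exists #|S|, E; exists Einv => // k.
by apply: Einj; rewrite EinvK.
Qed.

Arguments eval_word : simpl never.

Lemma span_mul (G : group) V (s : V -> G) g1 g2 :
  in_span s g1 -> in_span s g2 -> in_span s (gmul g1 g2).
Proof. by move=> [w1 <-] [w2 <-]; exists (w1 ++ w2); rewrite eval_cat. Qed.
Lemma span_gen (G : group) V (s : V -> G) y : in_span s (s y).
Proof. by exists [:: (y, false)]; rewrite eval_cons eval_nil mulg1. Qed.
Lemma span_geninv (G : group) V (s : V -> G) y : in_span s (ginv (s y)).
Proof. by exists [:: (y, true)]; rewrite eval_cons eval_nil mulg1. Qed.
Lemma span_one (G : group) V (s : V -> G) : in_span s gone.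
Proof. by exists [::]. Qed.

Definition sch_gen (G Q : group) (tau : G -> Q) n (a : 'I_n -> G) t (E : 'I_t -> Q)
  (x : Q -> G) (y : option ('I_t * 'I_n)) : G :=
  match y with
  | None => x gone
  | Some (k, i) => gmul (gmul (x (E k)) (a i)) (ginv (x (gmul (E k) (tau (a i)))))
  end.

Lemma schreier (G Q : group) (tau : G -> Q) n (a : 'I_n -> G) t (E : 'I_t -> Q)
  (x : Q -> G) :
  is_hom tau -> (forall g, in_span a g) -> (forall q, tau (x q) = q) ->
  (forall q, exists k, E k = q) ->
  forall g, tau g = gone -> in_span (sch_gen tau a E x) g.
Proof.
move=> th Ha Hx HE.
set s := sch_gen tau a E x.
have claim w q : in_span s (gmul (gmul (x q) (eval_word a w))
                                  (ginv (x (gmul q (tau (eval_word a w)))))).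
  elim: w q => [|[i b] w IH] q.
    by rewrite eval_nil mulg1 (hom1 th) mulg1 mulgV; apply: span_one.
  rewrite eval_cons th /eval_letter /=; set E_ := eval_word a w.
  case: b.
  - rewrite (homV th) (gmulA q).
    set q' := gmul q (ginv (tau (a i))).
    have [k Hk] := HE q'.
    have -> : gmul (gmul (x q) (gmul (ginv (a i)) E_)) (ginv (x (gmul q' (tau E_)))) =
       gmul (ginv (s (Some (k, i)))) (gmul (gmul (x q') E_) (ginv (x (gmul q' (tau E_))))).
      rewrite /s /= Hk /q' mulgVK !invMg !invgK !gmulA.
      by rewrite mulgVK.
    by apply: span_mul; [apply: span_geninv|apply: IH].
  - rewrite (gmulA q).
    set q' := gmul q (tau (a i)).
    have [k Hk] := HE q.
    have -> : gmul (gmul (x q) (gmul (a i) E_)) (ginv (x (gmul q' (tau E_)))) =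
       gmul (s (Some (k, i))) (gmul (gmul (x q') E_) (ginv (x (gmul q' (tau E_))))).
      by rewrite /s /= Hk !gmulA mulgVK.
    by apply: span_mul; [apply: span_gen|apply: IH].
move=> g Hg.
have [w Hw] := Ha g.
have := claim w gone; rewrite Hw Hg gmul1 => Hc.
have -> : g = gmul (gmul (ginv (s None)) (gmul (gmul (x gone) g) (ginv (x gone)))) (s None).
  by rewrite /s /= !gmulA gmulV gmul1 mulgVK.
by apply: span_mul; [apply: span_mul; [apply: span_geninv|]|apply: span_gen].
Qed.

Arguments eval_word : simpl never.

Lemma dir2 (G N Q : group) (tau : G -> Q) t l (xg : 'I_t -> G) (yg : 'I_l -> G)
  (R : seq (word ('I_t + 'I_l))) (h : 'I_t -> N) (k : 'I_l -> N) :
  is_hom tau -> (forall q, exists g, tau g = q) ->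
  QT_presentation tau xg yg R ->
  (forall r, List.In r R ->
     eval_word (fun v => match v with inl i => h i | inr j => k j end) r = gone) ->
  (forall n : N, in_span k n) ->
  exists f : G -> prod_group N Q, is_hom f /\ forall z, exists g, f g = z.
Proof.
move=> th tsurj [[Hgen Hrel] _ Hker] HR Hk.
set c := fun v => match v with inl i => xg i | inr j => yg j end.
set bb := fun v => match v with inl i => h i | inr j => k j end.
have key u v : eval_word c u = eval_word c v -> eval_word bb u = eval_word bb v.
  move=> E.
  have : wequiv R (u ++ winv v) [::].
    by apply/Hrel; rewrite eval_cat eval_winv E mulgV.
  move/(wequiv_sound HR); rewrite eval_cat eval_winv eval_nil => /eq_invg.
  by rewrite invgK.
pose wd g := proj1_sig (constructive_indefinite_description _ (Hgen g)).
have Hwd g : eval_word c (wd g) = g.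
  exact: (proj2_sig (constructive_indefinite_description _ (Hgen g))).
pose phi g := eval_word bb (wd g).
have phi_eval w : phi (eval_word c w) = eval_word bb w.
  by apply: key; rewrite Hwd.
have phih : is_hom phi.
  move=> g1 g2.
  have -> : gmul g1 g2 = eval_word c (wd g1 ++ wd g2) by rewrite eval_cat !Hwd.
  by rewrite phi_eval eval_cat.
exists (fun g => (phi g, tau g) : prod_group N Q); split.
  by move=> g1 g2; rewrite phih th.
case=> nn qq.
have [g0 Hg0] := tsurj qq.
have [w Hw] := Hk (gmul nn (ginv (phi g0))).
pose lw := map (lmap (@inr 'I_t 'I_l)) w.
have E1 : eval_word c lw = eval_word yg w by rewrite eval_map.
have E2 : eval_word bb lw = eval_word k w by rewrite eval_map.
exists (gmul (eval_word c lw) g0).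
rewrite phih th phi_eval E2 Hw mulgVK Hg0.
have -> : tau (eval_word c lw) = gone by apply/Hker; rewrite E1; exists w.
by rewrite gmul1.
Qed.

Lemma dir1 (G N Q : group) :
  finitely_presented G -> finite_group Q ->
  (exists f : G -> prod_group N Q, is_hom f /\ forall z, exists g, f g = z) ->
   (exists tau : G -> Q, [/\ is_hom tau, (forall q, exists g, tau g = q) &
     exists (t l : nat) (xg : 'I_t -> G) (yg : 'I_l -> G)
            (R : seq (word ('I_t + 'I_l))),
       QT_presentation tau xg yg R /\
       exists (h : 'I_t -> N) (k : 'I_l -> N),
         (forall r, List.In r R ->
            eval_word (fun v => match v with inl i => h i | inr j => k j end) r = gone)
         /\ (forall n : N, in_span k n)]).
Proof.
move=> [n [a [R0 Hpres]]] Qfin [f [fh fsurj]].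
pose tau g := (f g).2.
have th : is_hom tau by move=> g1 g2; rewrite /tau fh.
have f1h : is_hom (fun g => (f g).1) by move=> g1 g2; rewrite fh.
have tsurj q : exists g, tau g = q.
  by have [g Hg] := fsurj (gone, q); exists g; rewrite /tau Hg.
exists tau; split => //.
have [t [E [Einv EK EinvK]]] := finite_bij Qfin.
pose xg k := proj1_sig (constructive_indefinite_description _ (tsurj (E k))).
have Hxg k : tau (xg k) = E k.
  exact: (proj2_sig (constructive_indefinite_description _ (tsurj (E k)))).
pose x q := xg (Einv q).
have Hx q : tau (x q) = q by rewrite /x Hxg EinvK.
have HE q : exists k, E k = q by exists (Einv q).
set s := sch_gen tau a E x.
have Hsch := schreier th (proj1 Hpres) Hx HE.
pose Y := option ('I_t * 'I_n).
pose yg (j : 'I_#|{: Y}|) := s (enum_val j).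
have sker y : tau (s y) = gone.
  case: y => [[k i]|] /=; last by exact: Hx.
  by rewrite /s /= th (homV th) th !Hx mulgV.
have Hker g : tau g = gone <-> in_span yg g.
  split.
  - move/Hsch => [w <-].
    exists (map (lmap enum_rank) w); rewrite eval_map.
    by apply: eq_eval => y; rewrite /yg enum_rankK.
  - move=> [w <-]; rewrite (hom_eval _ _ th).
    by apply: eval_ones => j; rewrite /yg sker.
set c := fun v => match v with inl i => xg i | inr j => yg j end.
have cgen g : in_span c g.
  have -> : g = gmul (gmul g (ginv (x (tau g)))) (x (tau g)) by rewrite mulgVK.
  apply: span_mul.
    have : tau (gmul g (ginv (x (tau g)))) = gone by rewrite th (homV th) Hx mulgV.
    move/Hker => [w <-].
    exists (map (lmap inr) w); rewrite eval_map.
    by apply: eq_eval.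
  exact: (span_gen c (inl (Einv (tau g)))).
have [R HR] := tietze Hpres cgen.
exists t, #|{: Y}|, xg, yg, R; split.
  split => //.
  by apply: (eq_bij (Bijective EK EinvK)) => k /=; rewrite Hxg.
exists (fun i => (f (xg i)).1), (fun j => (f (yg j)).1); split.
  move=> r Hr.
  have -> : eval_word (fun v => match v with inl i => (f (xg i)).1 | inr j => (f (yg j)).1 end) r
      = (f (eval_word c r)).1.
    by rewrite (hom_eval _ _ f1h); apply: eq_eval => -[].
  have -> : eval_word c r = gone by apply/(proj2 HR); apply: wrel.
  by rewrite (hom1 fh).
move=> nn.
have [g Hg] := fsurj (nn, gone).
have : tau g = gone by rewrite /tau Hg.
move/Hker => [w Hw].
exists w.
rewrite -(hom_eval _ _ f1h) Hw Hg //.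
Qed.

Unset Implicit Arguments.
Theorem lemma3p2 (G N Q : group) :
  finitely_presented G -> finitely_presented N -> finite_group Q ->
  ((exists f : G -> prod_group N Q, is_hom f /\ forall z, exists g, f g = z)
   <->
   (exists tau : G -> Q, [/\ is_hom tau, (forall q, exists g, tau g = q) &
     exists (t l : nat) (xg : 'I_t -> G) (yg : 'I_l -> G)
            (R : seq (word ('I_t + 'I_l))),
       QT_presentation tau xg yg R /\
       exists (h : 'I_t -> N) (k : 'I_l -> N),
         (forall r, List.In r R ->
            eval_word (fun v => match v with inl i => h i | inr j => k j end) r = gone)
         /\ (forall n : N, in_span k n)])).
Proof.
move=> HG _ HQ; split; first exact: dir1.
move=> [tau [th ts [t [l [xg [yg [R [HP [h [k [HR Hk]]]]]]]]]]].
exact: (dir2 th ts HP HR Hk).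
Qed.
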